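(* Let $S$ be the basic spinor representation of $Spin(3)$, realized as a $2$-dimensional irreducible left module over the complex Clifford algebra $\mathbb C_3$ (generated by $e_1,e_2,e_3$ with $e_je_l+e_le_j=-2\delta_{jl}$, $e_{ij}=e_ie_j$), and let $v^{+}\in S$ be nonzero with $-ie_{12}v^{+}=v^{+}$. Put $z=x_1+ix_2$, $\overline z=x_1-ix_2$, $\frac{\partial}{\partial z}=\frac12(\partial_{x_1}-i\partial_{x_2})$, $\frac{\partial}{\partial \overline z}=\frac12(\partial_{x_1}+i\partial_{x_2})$, $X^{-}=2x_3\frac{\partial}{\partial\overline z}- z\frac{\partial}{\partial x_3}$, $\omega^-=\frac12(-e_{31}+ie_{23})$ (acting by left multiplication on $S$-valued polynomials), and $\tilde X^-=X^-+\omega^-$. For $k\in\mathbb N_0$ let $f^k_0=\frac{1}{k!2^k}\overline z^k$, $f^k_j=(X^-)^jf^k_0$ for $0<j\le 2k$, $f^k_{-1}=f^k_{2k+1}=0$, and $F^k_0=\frac{1}{k!2^k}\overline z^kv^+$, $F^k_j=(\tilde X^-)^jF^k_0$ for $0<j\le 2k+1$, $F^k_{-1}=0$. Then: (a) As operators on $S$-valued polynomials, $(\tilde X^-)^j=(X^-)^j+j(X^-)^{j-1}\omega^-$ for all $j\in\mathbb N$. In particular, for $j=0,\dots,2k+1$, $F^k_j=f^k_jv^+ + j f^k_{j-1}\,\omega^-v^+$. (b) $\big[\frac{\partial}{\partial x_3},(\tilde X^-)^j\big]=2j(\tilde X^-)^{j-1}\frac{\partial}{\partial\overline z}$ for all $j\in\mathbb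 N$. In particular, for each $k\in\mathbb N$, $$\frac{\partial F^k_j}{\partial x_3}=\begin{cases} j\,F^{k-1}_{j-1}, & j=1,\dots,2k,\\ 0, & j=0,\,2k+1.\end{cases}$$ (c) $[x_3,(\tilde X^-)^j]=j(\tilde X^-)^{j-1}z$ for all $j\in\mathbb N$ (where $x_3$ and $z$ act by multiplication). In particular, for each $k\in\mathbb N_0$ and $j=0,1,\dots,2k+1$, $$F^{k+1}_{j+1}=x_3F^k_j-jzF^k_{j-1}+\omega^-F^{k+1}_j.$$
   Context: Here $[A,B]=AB-BA$. The polynomials $f^k_j$ ($j=0,\dots,2k$) form the canonical weight basis of the space of complex $k$-homogeneous harmonic polynomials on $\mathbb R^3$, and $F^k_j$ ($j=0,\dots,2k+1$) form the canonical weight basis of the space of $S$-valued $k$-homogeneous polynomials $P$ with $(e_1\partial_{x_1}+e_2\partial_{x_2}+e_3\partial_{x_3})P=0$. *)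

(* Defs.v *)
From HB Require Import structures.
From mathcomp Require Import all_boot all_order all_algebra all_field.
From mathcomp Require Import mpoly.
Set Implicit Arguments. Unset Strict Implicit. Unset Printing Implicit Defensive.
Import Order.TTheory GRing.Theory Num.Theory.
Local Open Scope ring_scope.

(* complex polynomials in x1 = 'X_0, x2 = 'X_1, x3 = 'X_2 *)
Definition Pol := {mpoly algC[3]}.
(* S-valued polynomials, S = C^2 (column vectors); Clifford generators act by 2x2 matrices *)
Definition SPol := 'cV[Pol]_2.

Definition i0 : 'I_3 := @Ordinal 3 0 isT.
Definition i1 : 'I_3 := @Ordinal 3 1 isT.
Definition i2 : 'I_3 := @Ordinal 3 2 isT.

Definition x3 : Pol := 'X_i2.
Definition zp : Pol := 'X_i0 + 'i%:MP * 'X_i1.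
Definition zbp : Pol := 'X_i0 - 'i%:MP * 'X_i1.

Definition dzb (p : Pol) : Pol := (2^-1)%:MP * (mderiv i0 p + 'i%:MP * mderiv i1 p).
Definition d3 (p : Pol) : Pol := mderiv i2 p.

Definition Xm (p : Pol) : Pol := 2%:MP * x3 * dzb p - zp * d3 p.

Definition f0 (k : nat) : Pol := ((k`!)%:R * 2 ^+ k)^-1%:MP * zbp ^+ k.
Definition fk (k j : nat) : Pol := if (j <= 2 * k)%N then iter j Xm (f0 k) else 0.

Definition liftop (op : Pol -> Pol) (V : SPol) : SPol := map_mx op V.
Definition cst (v : 'cV[algC]_2) : SPol := map_mx (fun c => c%:MP) v.
Definition act (M : 'M[algC]_2) (V : SPol) : SPol := map_mx (fun c => c%:MP) M *m V.

Definition omegam (E : 'I_3 -> 'M[algC]_2) : 'M[algC]_2 :=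
  2^-1 *: (- (E i2 *m E i0) + 'i *: (E i1 *m E i2)).

Definition Xt (E : 'I_3 -> 'M[algC]_2) (V : SPol) : SPol := liftop Xm V + act (omegam E) V.

Definition Fk (E : 'I_3 -> 'M[algC]_2) (v : 'cV[algC]_2) (k j : nat) : SPol :=
  iter j (Xt E) (f0 k *: cst v).

(* Main.v *)
Require Import Defs.
From HB Require Import structures.
From mathcomp Require Import all_boot all_order all_algebra all_field.
From mathcomp Require Import mpoly.
From mathcomp Require Import ring zify.
Import Order.TTheory GRing.Theory Num.Theory.
Local Open Scope ring_scope.

Lemma dX (i j : 'I_3) : mderiv i ('X_j : Pol) = (j == i)%:R.
Proof.
rewrite mderivX mnm1E; case: eqP => [->|_]; last by rewrite scale0r.
rewrite scale1r (_ : (U_(i) - U_(i))%MM = 0%MM) ?mpolyX0 //.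
by apply/mnmP=> l; rewrite mnmBE mnm0E subnn.
Qed.
Lemma mpolyX0' : 'X_[0%MM] = 1 :> Pol. Proof. exact: mpolyX0. Qed.

Definition deriv_op (D : Pol -> Pol) :=
  [/\ forall p q, D (p + q) = D p + D q,
      forall c p, D (c%:MP * p) = c%:MP * D p &
      forall p q, D (p * q) = D p * q + p * D q].

Lemma mderiv_op i : deriv_op (mderiv i).
Proof. split => *; [exact: mderivD|exact: mderiv_mulC|exact: mderivM]. Qed.

Lemma comb_op (a b : Pol) D1 D2 D : deriv_op D1 -> deriv_op D2 ->
  (forall p, D p = a * D1 p + b * D2 p) -> deriv_op D.
Proof.
move=> [h1 h2 h3] [g1 g2 g3] e; split => *; rewrite !e.
- by rewrite h1 g1; ring.
- by rewrite h2 g2; ring.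
- by rewrite h3 g3; ring.
Qed.

Lemma dzb_op : deriv_op dzb.
Proof.
apply: (comb_op (2^-1%:MP) (2^-1%:MP * 'i%:MP) _ _ _ (mderiv_op i0) (mderiv_op i1)).
by move=> p; rewrite /dzb; ring.
Qed.

Lemma d3_op : deriv_op d3. Proof. exact: mderiv_op. Qed.
Lemma Xm_op : deriv_op Xm.
Proof.
apply: (comb_op (2%:MP * x3) (- zp) _ _ _ dzb_op d3_op).
by move=> p; rewrite /Xm; ring.
Qed.

Lemma dzb_zbp : dzb zbp = 1.
Proof.
rewrite /dzb /zbp !mderivB !mderiv_mulC !dX /=.
have -> : 2^-1%:MP * (1 - 'i%:MP * 0 + 'i%:MP * (0 - 'i%:MP * 1)) =
  (2^-1 * (1 - 'i * 'i))%:MP :> Pol.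
  by rewrite mpolyCM mpolyCB mpolyC1 mpolyCM; ring.
rewrite -expr2 sqrCi -mpolyC1; congr (_%:MP).
by rewrite opprK; field.
Qed.

Section DerivFacts.
Variable D : Pol -> Pol.
Hypothesis hD : deriv_op D.
Lemma dop_D p q : D (p + q) = D p + D q. Proof. by case: hD. Qed.
Lemma dop_C c p : D (c%:MP * p) = c%:MP * D p. Proof. by case: hD. Qed.
Lemma dop_M p q : D (p * q) = D p * q + p * D q. Proof. by case: hD. Qed.
Lemma dop_0 : D 0 = 0.
Proof. by apply: (@addrI _ (D 0)); rewrite -dop_D !addr0. Qed.
Lemma dop_N p : D (- p) = - D p.
Proof. by apply: (@addrI _ (D p)); rewrite -dop_D !subrr dop_0. Qed.
Lemma dop_B p q : D (p - q) = D p - D q. Proof. by rewrite dop_D dop_N. Qed.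
Lemma dop_1 : D 1 = 0.
Proof.
have := dop_M 1 1; rewrite !mul1r mulr1 => h.
by apply: (@addrI _ (D 1)); rewrite addr0 -h.
Qed.
Lemma dop_cst c : D c%:MP = 0.
Proof. by rewrite -[c%:MP]mulr1 dop_C dop_1 mulr0. Qed.
Lemma dop_Mn p n : D (p *+ n) = D p *+ n.
Proof. by elim: n => [|n ih]; rewrite ?mulr0n ?dop_0 // !mulrS dop_D ih. Qed.
Lemma dop_X p n : D (p ^+ n.+1) = (p ^+ n * D p) *+ n.+1.
Proof.
elim: n => [|n ih]; first by rewrite expr0 mul1r expr1.
rewrite [p ^+ n.+2]exprS dop_M ih mulrnAr mulrA -exprS [D p * _]mulrC.
by rewrite [RHS]mulrS.
Qed.
Lemma dop_cM c p : D (c%:MP * p) = c%:MP * D p. Proof. exact: dop_C. Qed.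
End DerivFacts.

Lemma dzb_zp : dzb zp = 0.
Proof.
rewrite /dzb /zp !mderivD !mderiv_mulC !dX /=.
have -> : 2^-1%:MP * (1 + 'i%:MP * 0 + 'i%:MP * (0 + 'i%:MP * 1)) =
  (2^-1 * (1 + 'i * 'i))%:MP :> Pol.
  by rewrite mpolyCM mpolyCD mpolyC1 mpolyCM; ring.
by rewrite -expr2 sqrCi subrr mulr0.
Qed.
Lemma dzb_x3 : dzb x3 = 0.
Proof. by rewrite /dzb /x3 !dX /= mulr0 addr0 mulr0. Qed.
Lemma d3_x3 : d3 x3 = 1. Proof. by rewrite /d3 /x3 dX. Qed.
Lemma d3_zp : d3 zp = 0.
Proof. by rewrite /d3 /zp mderivD mderiv_mulC !dX /= mulr0 addr0. Qed.
Lemma d3_zbp : d3 zbp = 0.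
Proof. by rewrite /d3 /zbp mderivB mderiv_mulC !dX /= mulr0 subr0. Qed.

Lemma Xm_zbp : Xm zbp = 2%:MP * x3.
Proof. by rewrite /Xm dzb_zbp d3_zbp mulr1 mulr0 subr0. Qed.
Lemma Xm_x3 : Xm x3 = - zp.
Proof. by rewrite /Xm dzb_x3 d3_x3 mulr1 mulr0 sub0r. Qed.
Lemma Xm_zp : Xm zp = 0.
Proof. by rewrite /Xm dzb_zp d3_zp !mulr0 subr0. Qed.

Lemma d3_dzb p : d3 (dzb p) = dzb (d3 p).
Proof.
rewrite /d3 /dzb mderiv_mulC mderivD mderiv_mulC.
by rewrite (mderiv_comm i0) (mderiv_comm i1).
Qed.

Lemma d3_Xm p : d3 (Xm p) = Xm (d3 p) + dzb p *+ 2.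
Proof.
rewrite {1}/Xm (dop_B _ d3_op) (dop_M _ d3_op (2%:MP * x3)) (dop_M _ d3_op 2%:MP).
rewrite (dop_M _ d3_op zp) d3_dzb d3_zp (dop_cst _ d3_op) d3_x3 /Xm.
rewrite mpolyC_nat -mulr_natl; ring.
Qed.

Lemma dzb_Xm p : dzb (Xm p) = Xm (dzb p).
Proof.
rewrite {1}/Xm (dop_B _ dzb_op) (dop_M _ dzb_op (2%:MP * x3)) (dop_M _ dzb_op 2%:MP).
rewrite (dop_M _ dzb_op zp) -d3_dzb dzb_zp (dop_cst _ dzb_op) dzb_x3 /Xm; ring.
Qed.

Lemma x3_Xm p : x3 * Xm p = Xm (x3 * p) + zp * p.
Proof. by rewrite (dop_M _ Xm_op) Xm_x3; ring. Qed.
Lemma zp_Xm p : zp * Xm p = Xm (zp * p).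
Proof. by rewrite (dop_M _ Xm_op) Xm_zp; ring. Qed.

Section AddOp.
Variable T : zmodType.
Variable f : T -> T.
Hypothesis fD : forall x y, f (x + y) = f x + f y.
Lemma f0' : f 0 = 0.
Proof. by apply: (@addrI _ (f 0)); rewrite -fD !addr0. Qed.
Lemma fN x : f (- x) = - f x.
Proof. by apply: (@addrI _ (f x)); rewrite -fD !subrr f0'. Qed.
Lemma iterAD n x y : iter n f (x + y) = iter n f x + iter n f y.
Proof. by elim: n => //= n ->; rewrite fD. Qed.
Lemma iter0 n : iter n f 0 = 0.
Proof. by elim: n => //= n ->; rewrite f0'. Qed.
Lemma iterN n x : iter n f (- x) = - iter n f x.
Proof. by elim: n => //= n ->; rewrite fN. Qed.
Lemma iterB n x y : iter n f (x - y) = iter n f x - iter n f y.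
Proof. by rewrite iterAD iterN. Qed.
Lemma iterMn n x m : iter n f (x *+ m) = iter n f x *+ m.
Proof.
elim: m => [|m ih]; first by rewrite !mulr0n iter0.
by rewrite !mulrS iterAD ih.
Qed.
Lemma fMn x m : f (x *+ m) = f x *+ m.
Proof. exact: (iterMn 1). Qed.
End AddOp.
Arguments fMn {T f} fD x m.
Arguments f0' {T f} fD.
Arguments fN {T f} fD x.
Arguments iterAD {T f} fD n x y.
Arguments iter0 {T f} fD n.
Arguments iterN {T f} fD n x.
Arguments iterB {T f} fD n x y.
Arguments iterMn {T f} fD n x m.

Lemma XmD p q : Xm (p + q) = Xm p + Xm q. Proof. exact: (dop_D _ Xm_op). Qed.

Definition nilp m p := iter m.+1 Xm p = 0.

Lemma nilpM n : forall a b p q, (a + b = n)%N -> nilp a p -> nilp b q ->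
  nilp (a + b) (p * q).
Proof.
rewrite /nilp; elim: n => [|n ih] a b p q.
  move=> /eqP; rewrite addn_eq0 => /andP[/eqP-> /eqP->] /= hp hq.
  by rewrite (dop_M _ Xm_op) hp hq mul0r mulr0 addr0.
move=> eab hp hq; rewrite iterSr (dop_M _ Xm_op) (iterAD XmD).
have -> : iter (a + b) Xm (Xm p * q) = 0.
  case: a eab hp => [|a] eab hp.
    by move: hp => /= ->; rewrite mul0r (iter0 XmD).
  rewrite addSn; apply: ih; first by move: eab; rewrite addSn => -[].
    by rewrite -iterSr.
  exact: hq.
case: b eab hq => [|b] eab hq.
  by move: hq => /= ->; rewrite mulr0 (iter0 XmD) add0r.
rewrite addnS add0r; apply: ih; first by move: eab; rewrite addnS => -[].
  exact: hp.
by rewrite -iterSr.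
Qed.

Lemma iter_Xm_cM c n p : iter n Xm (c%:MP * p) = c%:MP * iter n Xm p.
Proof. by elim: n => //= n ->; rewrite (dop_C _ Xm_op). Qed.

Lemma nil_zbp k : nilp (2 * k) (zbp ^+ k).
Proof.
elim: k => [|k ih]; first by rewrite /nilp /= (dop_1 _ Xm_op).
rewrite exprS (_ : (2 * k.+1 = 2 + 2 * k)%N); last by rewrite mulnS.
apply: nilpM => //.
rewrite /nilp /= Xm_zbp (dop_C _ Xm_op) Xm_x3 (dop_C _ Xm_op) (dop_N _ Xm_op).
by rewrite Xm_zp oppr0 !mulr0.
Qed.

Lemma nil_f0 k n : (2 * k < n)%N -> iter n Xm (f0 k) = 0.
Proof.
move=> lt; rewrite -(subnKC lt) addSn iterSr addnC iterD -iterSr.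
rewrite /f0 iter_Xm_cM.
by have := nil_zbp k; rewrite /nilp => ->; rewrite mulr0 (iter0 XmD).
Qed.

Definition cf k : algC := (k`!%:R * 2 ^+ k)^-1.
Lemma cfS k : cf k.+1 * 2 * (k.+1)%:R = cf k.
Proof.
rewrite /cf factS natrM exprS.
have h1 : (k`!%:R : algC) != 0 by rewrite pnatr_eq0 -lt0n fact_gt0.
have h2 : ((k.+1)%:R : algC) != 0 by rewrite pnatr_eq0.
have h3 : (2 : algC) != 0 by rewrite pnatr_eq0.
field.
by rewrite expf_neq0 // h1 (addrC 1) natr1 h2.
Qed.

Lemma Xm_f0S k : Xm (f0 k.+1) = x3 * f0 k.
Proof.
rewrite /f0 -/(cf k.+1) -/(cf k) (dop_C _ Xm_op) (dop_X _ Xm_op) Xm_zbp.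
rewrite -(cfS k) !mpolyCM -mulr_natr mpolyC_nat mpolyC_nat.
move: (cf k.+1)%:MP (zbp ^+ k) (k.+1%:R : Pol) => a b c; ring.
Qed.

Lemma dzb_f0S k : dzb (f0 k.+1) *+ 2 = f0 k.
Proof.
rewrite /f0 -/(cf k.+1) -/(cf k) (dop_C _ dzb_op) (dop_X _ dzb_op) dzb_zbp.
rewrite -(cfS k) !mpolyCM -[_ *+ k.+1]mulr_natr -[_ *+ 2]mulr_natr !mpolyC_nat.
move: (cf k.+1)%:MP (zbp ^+ k) (k.+1%:R : Pol) => a b c; ring.
Qed.

Lemma d3_f0 k : d3 (f0 k) = 0.
Proof.
rewrite /f0 (dop_C _ d3_op); case: k => [|k]; first by rewrite expr0 (dop_1 _ d3_op) mulr0.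
by rewrite (dop_X _ d3_op) d3_zbp mulr0 mul0rn mulr0.
Qed.
Lemma omega2 (E : 'I_3 -> 'M[algC]_2) :
  (forall a b : 'I_3, E a *m E b + E b *m E a = (- 2 * (a == b)%:R)%:M) ->
  omegam E *m omegam E = 0.
Proof.
move=> hE.
have sq x : E x *m E x = - 1%:M.
  have := hE x x; rewrite eqxx mulr1 -mulr2n -scaler_nat -scalemx1 => h.
  have h2 : (2 : algC) != 0 by rewrite pnatr_eq0.
  by rewrite -[LHS]scale1r -(mulVf h2) -scalerA h scalerA mulrN mulVf // scaleN1r.
have ac x y : x != y -> E x *m E y = - (E y *m E x).
  move=> nxy; have := hE x y; rewrite (negbTE nxy) mulr0 => /eqP.
  by rewrite -scalemx1 scale0r addr_eq0 => /eqP.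
have n02 : i0 != i2 by []. have n12 : i1 != i2 by []. have n01 : i0 != i1 by [].
have aa := sq i0; have bb := sq i1; have cc := sq i2.
have ab := ac _ _ n01; have ac2 := ac _ _ n02; have bc := ac _ _ n12.
rewrite /omegam; set a := E i0 in aa ab ac2 *; set b := E i1 in bb ab bc *;
  set c := E i2 in cc ac2 bc *.
have caca : (c *m a) *m (c *m a) = - 1%:M.
  by rewrite mulmxA -(mulmxA c a c) ac2 mulmxN mulmxA cc !mulNmx mul1mx opprK aa.
have bcbc : (b *m c) *m (b *m c) = - 1%:M.
  by rewrite {1}bc mulNmx mulmxA -(mulmxA c b b) bb mulmxN mulmx1 !mulNmx opprK cc.
have bcca : (b *m c) *m (c *m a) = a *m b.
  by rewrite mulmxA -(mulmxA b c c) cc mulmxN mulmx1 mulNmx ab.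
have cabc : (c *m a) *m (b *m c) = - (a *m b).
  rewrite mulmxA -(mulmxA c a b) -mulmxA -(mulmxA a b c) bc mulmxN mulmxA ac2.
  rewrite !mulNmx !mulmxN opprK mulmxA mulmxA cc !mulNmx mul1mx.
  by [].
rewrite -scalemxAl -scalemxAr scalerA !mulmxDl !mulmxDr !mulNmx !mulmxN opprK.
rewrite -!scalemxAl -!scalemxAr caca bcbc bcca cabc.
rewrite [X in _ + X]addrC !addrA scalerN opprK addrAC addrK scalerA -(expr2 'i) sqrCi.
by rewrite scaleN1r opprK addNr scaler0.
Qed.


Lemma iter_comm (T : Type) (g C : T -> T) : (forall x, g (C x) = C (g x)) ->
  forall n x, g (iter n C x) = iter n C (g x).
Proof. by move=> h; elim=> //= n ih x; rewrite h ih. Qed.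

Lemma iter_sum (T : zmodType) (A B C : T -> T) :
  (forall x y, A (x + y) = A x + A y) -> (forall x y, B (x + y) = B x + B y) ->
  (forall x, A (B x) = B (A x)) -> (forall x, B (B x) = 0) ->
  (forall x, C x = A x + B x) ->
  forall j x, iter j C x = iter j A x + iter j.-1 A (B x) *+ j.
Proof.
move=> hA hB hAB hBB hC; elim=> [|j ih] x /=; first by rewrite mulr0n addr0.
rewrite ih hC hA hB (fMn hA) (fMn hB).
have hBA y : B (A y) = A (B y) by rewrite hAB.
rewrite (@iter_comm _ _ _ hBA) (@iter_comm _ _ _ hBA) hBB (iter0 hA) mul0rn addr0.
case: j {ih} => [|j] /=; first by rewrite !mulr0n !addr0 mulr1n.
by rewrite -addrA -mulrSr.
Qed.

Lemma comm_iter (T : zmodType) (C D H : T -> T) :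
  (forall x y, C (x + y) = C x + C y) ->
  (forall x, D (C x) = C (D x) + H x) -> (forall x, H (C x) = C (H x)) ->
  forall j x, D (iter j C x) = iter j C (D x) + iter j.-1 C (H x) *+ j.
Proof.
move=> hC hD hH; elim=> [|j ih] x /=; first by rewrite mulr0n addr0.
rewrite hD ih hC (fMn hC) (@iter_comm _ _ _ hH).
case: j {ih} => [|j] /=; first by rewrite mulr0n addr0 mulr1n.
by rewrite -addrA -mulrSr.
Qed.

Lemma liftopD op : (forall p q, op (p + q) = op p + op q) ->
  forall U V : SPol, liftop op (U + V) = liftop op U + liftop op V.
Proof. by move=> h U V; apply/matrixP=> i j; rewrite !mxE h. Qed.

Lemma liftop_act op : deriv_op op -> forall M V,
  liftop op (act M V) = act M (liftop op V).
Proof.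
move=> hop M V; apply/matrixP=> i j; rewrite !mxE.
rewrite (big_morph op (dop_D _ hop) (dop_0 _ hop)); apply: eq_bigr => k _.
by rewrite !mxE (dop_C _ hop).
Qed.

Lemma liftop_scale op (a : Pol) : (forall p, op (a * p) = a * op p) ->
  forall V : SPol, liftop op (a *: V) = a *: liftop op V.
Proof. by move=> h V; apply/matrixP=> i j; rewrite !mxE h. Qed.

Lemma act_scale M (a : Pol) V : act M (a *: V) = a *: act M V.
Proof. by rewrite /act scalemxAr. Qed.
Lemma actD M (U V : SPol) : act M (U + V) = act M U + act M V.
Proof. by rewrite /act mulmxDr. Qed.
Lemma act_act M N V : act M (act N V) = act (M *m N) V.
Proof.
rewrite /act mulmxA; congr (_ *m _).
by rewrite (map_mxM (@mpolyC 3 algC)).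
Qed.
Lemma act0 V : act 0 V = 0.
Proof. by rewrite /act (map_mx0 (@mpolyC 3 algC)) mul0mx. Qed.
Lemma act_cst M v : act M (cst v) = cst (M *m v).
Proof. by rewrite /act /cst (map_mxM (@mpolyC 3 algC)). Qed.

Lemma liftop_cst op : deriv_op op -> forall p v,
  liftop op (p *: cst v) = op p *: cst v.
Proof.
move=> hop p v; apply/matrixP=> i j; rewrite !mxE.
by rewrite mulrC (dop_C _ hop) mulrC.
Qed.

Lemma iter_cst op : deriv_op op -> forall n p v,
  iter n (liftop op) (p *: cst v) = iter n op p *: cst v.
Proof. by move=> hop; elim=> //= n ih p v; rewrite ih (liftop_cst _ hop). Qed.

Theorem theorem3p2 (E : 'I_3 -> 'M[algC]_2) (vp : 'cV[algC]_2) :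
  (* Clifford relations e_j e_l + e_l e_j = -2 delta_{jl}: C^2 is then an
     irreducible C_3-module, i.e. a realization of the spinor module S *)
  (forall a b : 'I_3, E a *m E b + E b *m E a = (- 2 * (a == b)%:R)%:M) ->
  vp != 0 ->
  - 'i *: (E i0 *m E i1 *m vp) = vp ->
  (* (a) *)
  ((forall j : nat, (0 < j)%N -> forall V : SPol,
      iter j (Xt E) V
      = iter j (liftop Xm) V + iter j.-1 (liftop Xm) (act (omegam E) V) *+ j)
   /\ (forall k j : nat, (j <= 2 * k + 1)%N ->
      Fk E vp k j = fk k j *: cst vp + (fk k j.-1 *: cst (omegam E *m vp)) *+ j))
  /\
  (* (b) *)
  ((forall j : nat, (0 < j)%N -> forall V : SPol,
      liftop d3 (iter j (Xt E) V) - iter j (Xt E) (liftop d3 V)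
      = iter j.-1 (Xt E) (liftop dzb V) *+ (2 * j))
   /\ (forall k j : nat, (0 < k)%N -> (j <= 2 * k + 1)%N ->
      liftop d3 (Fk E vp k j)
      = if (1 <= j <= 2 * k)%N then Fk E vp k.-1 j.-1 *+ j else 0))
  /\
  (* (c) *)
  ((forall j : nat, (0 < j)%N -> forall V : SPol,
      x3 *: iter j (Xt E) V - iter j (Xt E) (x3 *: V)
      = iter j.-1 (Xt E) (zp *: V) *+ j)
   /\ (forall k j : nat, (j <= 2 * k + 1)%N ->
      Fk E vp k.+1 j.+1
      = x3 *: Fk E vp k j - (zp *: Fk E vp k j.-1) *+ j + act (omegam E) (Fk E vp k.+1 j))).
Proof.
move=> hE _ _.
have om2 := omega2 _ hE; set w := omegam E.
have XmDV : forall U V : SPol, liftop Xm (U + V) = liftop Xm U + liftop Xm V.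
  exact: (liftopD _ XmD).
have actDw : forall U V, act w (U + V) = act w U + act w V by move=> U V; apply: actD.
have XtD : forall U V, Xt E (U + V) = Xt E U + Xt E V.
  by move=> U V; rewrite /Xt XmDV actDw addrACA.
have commX : forall V, liftop Xm (act w V) = act w (liftop Xm V).
  by move=> V; apply: (liftop_act _ Xm_op).
have nilw : forall V, act w (act w V) = 0 by move=> V; rewrite act_act om2 act0.
have partA : forall j V, iter j (Xt E) V
    = iter j (liftop Xm) V + iter j.-1 (liftop Xm) (act w V) *+ j.
  by apply: iter_sum => // V; rewrite /Xt.
have wXt : forall V, act w (Xt E V) = Xt E (act w V).
  by move=> V; rewrite /Xt actDw commX.
have F0E : forall k, Fk E vp k 0 = f0 k *: cst vp by [].
have d3X : forall V, liftop d3 (liftop Xm V) = liftop Xm (liftop d3 V) + liftop dzb V *+ 2.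
  by move=> V; apply/matrixP=> a b; rewrite !(mxE, mulmxnE) d3_Xm.
have dzbX : forall V, liftop dzb (liftop Xm V) = liftop Xm (liftop dzb V).
  by move=> V; apply/matrixP=> a b; rewrite !mxE dzb_Xm.
have x3X : forall V, x3 *: liftop Xm V = liftop Xm (x3 *: V) + zp *: V.
  by move=> V; apply/matrixP=> a b; rewrite !mxE x3_Xm.
have zpX : forall V, zp *: liftop Xm V = liftop Xm (zp *: V).
  by move=> V; apply/matrixP=> a b; rewrite !mxE zp_Xm.
have zpXt : forall V, zp *: Xt E V = Xt E (zp *: V).
  by move=> V; rewrite /Xt scalerDr zpX act_scale.
have bD : forall j V, liftop d3 (iter j (Xt E) V) = iter j (Xt E) (liftop d3 V)
    + iter j.-1 (Xt E) (liftop dzb V *+ 2) *+ j.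
  apply: comm_iter => // V.
    rewrite /Xt (liftopD _ (dop_D _ d3_op)) (liftop_act _ d3_op) d3X.
    by rewrite addrAC.
  rewrite (fMn XtD) /Xt (liftopD _ (dop_D _ dzb_op)) (liftop_act _ dzb_op) dzbX.
  by [].
have cD : forall j V, x3 *: iter j (Xt E) V = iter j (Xt E) (x3 *: V)
    + iter j.-1 (Xt E) (zp *: V) *+ j.
  apply: (@comm_iter _ (Xt E) (fun V => x3 *: V) (fun V => zp *: V)) => // V.
  by rewrite /Xt scalerDr x3X act_scale addrAC.
split; [split|split; [split|split]].
- by move=> j _ V; apply: partA.
- move=> k j hj; rewrite /Fk partA (iter_cst _ Xm_op) act_scale act_cst.
  rewrite (iter_cst _ Xm_op) /fk.
  have -> : (j.-1 <= 2 * k)%N by move: hj; case: j => //= j; lia.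
  case: ifP => // hjk; rewrite nil_f0 ?scale0r //; move: hjk hj; lia.
- move=> j _ V; rewrite bD [_ + _ *+ j]addrC addrK (iterMn XtD) mulrnA.
  by [].
- move=> [|k] // j _ hj; rewrite /Fk bD (liftop_cst _ d3_op) d3_f0 scale0r.
  rewrite (iter0 XtD) add0r (liftop_cst _ dzb_op) scalerMnl dzb_f0S /=.
  case: ifP => // h; case: j hj h => [|j] hj h; first by rewrite mulr0n.
  have ej : j = (2 * k.+1)%N by move: hj h => /=; lia.
  rewrite ej partA (iter_cst _ Xm_op) act_scale act_cst (iter_cst _ Xm_op).
  rewrite !nil_f0 ?scale0r ?mul0rn ?addr0 ?(iter0 XtD) ?mul0rn //; lia.
- move=> j _ V; rewrite cD [_ + _ *+ j]addrC addrK //.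
- move=> k j hj; rewrite /Fk iterSr {2}/Xt (liftop_cst _ Xm_op) Xm_f0S -scalerA.
  rewrite (iterAD XtD) -(@iter_comm _ _ _ wXt).
  have e := cD j (f0 k *: cst vp).
  rewrite (_ : iter j (Xt E) (x3 *: (f0 k *: cst vp)) = x3 *: iter j (Xt E) (f0 k *: cst vp)
     - iter j.-1 (Xt E) (zp *: (f0 k *: cst vp)) *+ j); last by rewrite e addrK.
  by rewrite -(@iter_comm _ (fun V => zp *: V) _ zpXt).
Qed.
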